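(* For every $\tau\in\mathbb C$ and every VK parameters $\alpha,\beta,\gamma$, as formal power series in $t$, $$1+\sum_{k\ge1}\epsilon_{\alpha,\beta,\gamma}(\pi_\tau g_k)\,t^k=e^{\gamma\theta\tau t}\prod_{i=1}^\infty\frac{1+\theta\beta_i(\tau-\theta\beta_i)t}{(1-\alpha_i(\tau+\alpha_i)t)^{\theta}}.$$
   Context: Fix $\theta>0$. $\Lambda$ is the algebra of symmetric functions in $x_1,x_2,\dots$; $g_k\in\Lambda$ are defined by $1+\sum_{k\ge1}g_kt^k=\prod_j(1-x_jt)^{-\theta}$. VK parameters: $\alpha_1\ge\alpha_2\ge\dots\ge0$, $\beta_1\ge\beta_2\ge\dots\ge0$, $\gamma\ge0$, $\sum(\alpha_i+\beta_i)<\infty$. $\epsilon_{\alpha,\beta,\gamma}:\Lambda\to\mathbb C$ is the algebra homomorphism with $1+\sum_k\epsilon_{\alpha,\beta,\gamma}(g_k)t^k=e^{\gamma\theta t}\prod_i\frac{1+\beta_i\theta t}{(1-\alpha_it)^\theta}$. For $\tau\in\mathbb C$, $\pi_\tau:\Lambda\to\Lambda$ is the homomorphism $(\pi_\tau f)(x_1,x_2,\dots)=f(x_1(x_1+\tau),x_2(x_2+\tau),\dots)$. *)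

(* Defs.v *)
From HB Require Import structures.
From mathcomp Require Import all_boot all_order all_algebra.
From mathcomp Require Import all_classical all_reals all_analysis.
From mathcomp Require Import complex Rstruct Rstruct_topology.
From Stdlib Require Rdefinitions.
From mathcomp Require mpoly.
Set Implicit Arguments.
Unset Strict Implicit.
Unset Printing Implicit Defensive.
Import Order.TTheory GRing.Theory Num.Theory.
Import numFieldNormedType.Exports.
Local Open Scope classical_set_scope.
Local Open Scope ring_scope.
Local Open Scope complex_scope.

Notation R := Rdefinitions.R.

Definition C : numClosedFieldType := R[i].

Definition fps := nat -> C.

Definition sone : fps := fun k => (k == 0%N)%:R.
Definition smul (f g : fps) : fps :=
  fun k => \sum_(i < k.+1) f i * g (k - i)%N.
Definition sprod (s : seq fps) : fps := foldr smul sone s.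

Definition rising (th : C) (k : nat) : C := \prod_(i < k) (th + i%:R).
(* (1 - a t)^(-th) = sum_k  th^(k rising)/k!  a^k t^k  (binomial series) *)
Definition binser (th a : C) : fps :=
  fun k => rising th k / (k`!)%:R * a ^+ k.
Definition linser (c : C) : fps :=
  fun k => if k == 0%N then 1 else if k == 1%N then c else 0.
Definition expser (c : C) : fps := fun k => c ^+ k / (k`!)%:R.
Definition genser (c : nat -> C) : fps :=
  fun k => if k is 0%N then 1 else c k.

Definition is_infprod (F : nat -> fps) (P : fps) : Prop :=
  forall k : nat,
    (fun N : nat => sprod [seq F i | i <- iota 0 N] k) @ \oo --> P k.

(* A symmetric function f(x_1, x_2, ...) is represented by the function
   sending a finite list s = [x_1; ...; x_n] to f(x_1, ..., x_n, 0, 0, ...).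
   The ring operations of Lambda are then the pointwise ones. *)
Definition symfun := seq C -> C.

Definition in_Lambda (F : symfun) : Prop :=
  [/\ (forall s s' : seq C, perm_eq s s' -> F s = F s'),
      (forall s : seq C, F (rcons s 0) = F s)
    & exists d : nat, forall n : nat, exists p : mpoly.mpoly n C,
        (forall m : mpoly.multinom n, mpoly.mcoeff m p != 0 -> (mpoly.mdeg m <= d)%N) /\
        forall x : n.-tuple C, F x = mpoly.meval (fun i => tnth x i) p].

(* g_k : 1 + sum_{k>=1} g_k t^k = prod_j (1 - x_j t)^(-theta) *)
Definition g_k (theta : R) (k : nat) : symfun :=
  fun s => sprod [seq binser theta%:C x | x <- s] k.

Definition pi_tau (tau : C) (F : symfun) : symfun :=
  fun s => F [seq x * (x + tau) | x <- s].

Definition is_alg_hom (eps : symfun -> C) : Prop :=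
  [/\ forall c : C, eps (fun _ => c) = c,
      forall F G, in_Lambda F -> in_Lambda G ->
        eps (fun s => F s + G s) = eps F + eps G
    & forall F G, in_Lambda F -> in_Lambda G ->
        eps (fun s => F s * G s) = eps F * eps G].

Definition is_VK (alpha beta : nat -> R) (gamma : R) : Prop :=
  [/\ forall i, alpha i.+1 <= alpha i,
      forall i, beta i.+1 <= beta i,
      forall i, 0 <= alpha i /\ 0 <= beta i,
      0 <= gamma
    & cvg (series (fun i => alpha i + beta i) @ \oo)].

(* eps = eps_{alpha,beta,gamma}:
   1 + sum_k eps(g_k) t^k = e^{gamma theta t} prod_i (1 + beta_i theta t) (1 - alpha_i t)^(-theta) *)
Definition is_VK_hom (theta : R) (alpha beta : nat -> R) (gamma : R)
    (eps : symfun -> C) : Prop :=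
  is_alg_hom eps /\
  exists P : fps,
    is_infprod (fun i => smul (linser ((beta i)%:C * theta%:C))
                              (binser theta%:C (alpha i)%:C)) P /\
    genser (fun k => eps (g_k theta k)) = smul (expser (gamma%:C * theta%:C)) P.

(* Main.v *)
Require Import Defs.
From HB Require Import structures.
From mathcomp Require Import all_boot all_order all_algebra.
From mathcomp Require all_classical all_reals all_analysis.
From mathcomp Require Import complex Rstruct Rstruct_topology.
From mathcomp Require Import ring zify.
From mathcomp Require mpoly.
Set Implicit Arguments.
Unset Strict Implicit.
Unset Printing Implicit Defensive.
Import Order.TTheory GRing.Theory Num.Theory.
Local Open Scope ring_scope.

Implicit Types p q r y z : {poly C}.
Definition dvX (n : nat) (p : {poly C}) := exists r : {poly C}, p = r * 'X^n.

Lemma dvXP n p : dvX n p <-> (forall k, (k < n)%N -> p`_k = 0).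
Proof.
split.
  by move=> [r ->] k kn; rewrite coefMXn kn.
move=> H; exists (drop_poly n p).
have t0 : take_poly n p = 0.
  apply/polyP => i; rewrite coef_take_poly coef0; case: ifP => // /H //.
by rewrite -{1}(poly_take_drop n p) t0 add0r.
Qed.

Lemma dvX0 n : dvX n 0.
Proof. by exists 0; rewrite mul0r. Qed.

Lemma dvXD n p q : dvX n p -> dvX n q -> dvX n (p + q).
Proof. by move=> [r ->] [s ->]; exists (r + s); rewrite mulrDl. Qed.

Lemma dvXN n p : dvX n p -> dvX n (- p).
Proof. by move=> [r ->]; exists (- r); rewrite mulNr. Qed.

Lemma dvXB n p q : dvX n p -> dvX n q -> dvX n (p - q).
Proof. by move=> hp hq; apply: dvXD => //; apply: dvXN. Qed.

Lemma dvXMr n p a : dvX n p -> dvX n (p * a).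
Proof. by move=> [r ->]; exists (r * a); ring. Qed.

Lemma dvXMl n p a : dvX n p -> dvX n (a * p).
Proof. by move=> [r ->]; exists (a * r); ring. Qed.

Lemma dvXZ n p c : dvX n p -> dvX n (c *: p).
Proof. by move=> [r ->]; exists (c *: r); rewrite scalerAl. Qed.

Lemma dvX_sum n (I : Type) (s : seq I) (F : I -> {poly C}) :
  (forall i, dvX n (F i)) -> dvX n (\sum_(i <- s) F i).
Proof.
move=> H; elim: s => [|a s IH]; first by rewrite big_nil; apply: dvX0.
by rewrite big_cons; apply: dvXD.
Qed.

Lemma dvX_le m n p : (m <= n)%N -> dvX n p -> dvX m p.
Proof.
move=> mn /dvXP H; apply/dvXP => k km; apply: H; exact: leq_trans km mn.
Qed.

Lemma dvX_X p : p`_0 = 0 -> dvX 1 p.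
Proof. by move=> h; apply/dvXP => k; rewrite ltnS leqn0 => /eqP ->. Qed.

Lemma dvXX m n p q : dvX m p -> dvX n q -> dvX (m + n) (p * q).
Proof.
by move=> [r ->] [s ->]; exists (r * s); rewrite exprD; ring.
Qed.

Lemma dvX_exp n p : dvX 1 p -> dvX n (p ^+ n).
Proof.
move=> [r ->]; exists (r ^+ n); rewrite exprMn -exprM mul1n //.
Qed.

Definition eqm (n : nat) (p q : {poly C}) := dvX n (p - q).

Lemma eqmP n p q : eqm n p q <-> (forall k, (k < n)%N -> p`_k = q`_k).
Proof.
rewrite /eqm dvXP; split => H k kn; move: (H k kn); rewrite coefB.
  by move/eqP; rewrite subr_eq0 => /eqP.
by move=> ->; rewrite subrr.
Qed.

Lemma eqm_refl n p : eqm n p p.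
Proof. by rewrite /eqm subrr; apply: dvX0. Qed.

Lemma eqm_sym n p q : eqm n p q -> eqm n q p.
Proof. by move=> h; rewrite /eqm -opprB; apply: dvXN. Qed.

Lemma eqm_trans n p q r : eqm n p q -> eqm n q r -> eqm n p r.
Proof.
move=> h1 h2; have := dvXD h1 h2; rewrite /eqm.
by have -> : p - q + (q - r) = p - r by ring.
Qed.

Lemma eqmD n p q p' q' : eqm n p p' -> eqm n q q' -> eqm n (p + q) (p' + q').
Proof.
move=> h1 h2; have := dvXD h1 h2; rewrite /eqm.
by have -> : p - p' + (q - q') = p + q - (p' + q') by ring.
Qed.

Lemma eqmM n p q p' q' : eqm n p p' -> eqm n q q' -> eqm n (p * q) (p' * q').
Proof.
move=> h1 h2; have := dvXD (dvXMr q h1) (dvXMl p' h2); rewrite /eqm.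
by have -> : (p - p') * q + p' * (q - q') = p * q - p' * q' by ring.
Qed.

Lemma eqmZ n p q c : eqm n p q -> eqm n (c *: p) (c *: q).
Proof. by move=> h; rewrite /eqm -scalerBr; apply: dvXZ. Qed.

Lemma eqm_le m n p q : (m <= n)%N -> eqm n p q -> eqm m p q.
Proof. exact: dvX_le. Qed.

Lemma eqm_coef n p q k : eqm n p q -> (k < n)%N -> p`_k = q`_k.
Proof. by move/eqmP; apply. Qed.

Lemma comp_Xn n y : 'X^n \Po y = y ^+ n.
Proof.
elim: n => [|n IH]; first by rewrite !expr0 -polyC1 comp_polyC.
by rewrite !exprS comp_polyM comp_polyX IH.
Qed.

Lemma comp_dvX n p y : dvX 1 y -> dvX n p -> dvX n (p \Po y).
Proof.
move=> hy [r ->]; rewrite comp_polyM comp_Xn.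
by apply: dvXMl; apply: dvX_exp.
Qed.

Lemma eqm_comp1 n p p' y : dvX 1 y -> eqm n p p' -> eqm n (p \Po y) (p' \Po y).
Proof. by move=> hy h; rewrite /eqm -comp_polyB; apply: comp_dvX. Qed.

Lemma eqm_comp2 n p y z : eqm n y z -> eqm n (p \Po y) (p \Po z).
Proof.
move=> h; rewrite /eqm !comp_polyE -sumrB; apply: dvX_sum => i.
rewrite -scalerBr; apply: dvXZ; rewrite subrXX; exact: dvXMr.
Qed.

Lemma eqm_comp n p p' y z : dvX 1 y -> dvX 1 z -> eqm n p p' -> eqm n y z ->
  eqm n (p \Po y) (p' \Po z).
Proof.
move=> hy hz h1 h2; apply: eqm_trans (eqm_comp1 hy h1) (eqm_comp2 _ h2).
Qed.

Lemma eqm_deriv n p q : eqm n.+1 p q -> eqm n p^`() q^`().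
Proof.
move/eqmP => h; apply/eqmP => k kn; rewrite !coef_deriv h //.
Qed.

Lemma ode_uniq n (a b H : {poly C}) : a`_0 = 1 -> H`_0 = 0 ->
  eqm n (a * H^`()) (b * H) -> eqm n.+1 H 0.
Proof.
move=> a0 H0 hE.
have key : forall m, (m <= n)%N -> forall k, (k <= m)%N -> H`_k = 0.
  elim => [|m IH] mn k km.
    by move: km; rewrite leqn0 => /eqP ->.
  have IH' := IH (ltnW mn).
  move: km; rewrite leq_eqVlt => /orP [/eqP ->|]; last by rewrite ltnS; apply: IH'.
  have := eqm_coef hE mn.
  rewrite !coefM big_ord_recl /= subn0 a0 mul1r coef_deriv.
  have -> : \sum_(i < m) a`_(lift ord0 i) * H^`()`_(m - lift ord0 i) = 0.
    apply: big1 => i _; rewrite coef_deriv /= IH'; first by rewrite mul0rn mulr0.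
    have hi := ltn_ord i.
    rewrite /bump leq0n add1n; lia.
  have -> : \sum_(i < m.+1) b`_i * H`_(m - i) = 0.
    by apply: big1 => i _; rewrite IH' ?mulr0 // leq_subr.
  rewrite addr0 => /eqP; rewrite mulrn_eq0 /=.
  by move/eqP.
apply/eqmP => k; rewrite coef0 ltnS => kn; exact: (key n (leqnn n) k kn).
Qed.
Definition tr (N : nat) (f : fps) : {poly C} := \poly_(i < N) f i.

Lemma coef_tr N f k : (tr N f)`_k = if (k < N)%N then f k else 0.
Proof. by rewrite coef_poly. Qed.

Lemma tr_smul N f g : eqm N (tr N (smul f g)) (tr N f * tr N g).
Proof.
apply/eqmP => k kN; rewrite coef_tr kN coefM /smul; apply: eq_bigr => i _.
rewrite !coef_tr (leq_ltn_trans _ kN) ?(leq_ltn_trans (leq_subr _ _) kN) //.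
by rewrite -ltnS.
Qed.

Lemma tr_sprod N s : eqm N (tr N (sprod s)) (\prod_(f <- s) tr N f).
Proof.
elim: s => [|f s IH].
  rewrite big_nil; apply/eqmP => k kN; rewrite coef_tr kN coef1 /sprod /= /sone.
  by case: (k == 0%N).
rewrite big_cons /=; apply: eqm_trans (tr_smul _ _ _) _.
by apply: eqmM => //; apply: eqm_refl.
Qed.

Lemma sprod_coef N s k : (k < N)%N -> sprod s k = (\prod_(f <- s) tr N f)`_k.
Proof. by move=> kN; rewrite -(eqm_coef (tr_sprod N s) kN) coef_tr kN. Qed.

Lemma coef0_comp p y : dvX 1 y -> (p \Po y)`_0 = p`_0.
Proof.
move=> hy; have h : eqm 1 y 0 by rewrite /eqm subr0.
by rewrite (eqm_coef (eqm_comp2 p h)) // comp_poly0r coefC.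
Qed.

Lemma comp1 y : (1 : {poly C}) \Po y = 1.
Proof. by rewrite -polyC1 comp_polyC. Qed.

Lemma risingS th k : rising th k.+1 = rising th k * (th + k%:R).
Proof. by rewrite /rising big_ord_recr. Qed.

Lemma fact_neq0 k : (k`!)%:R != 0 :> C.
Proof. by rewrite pnatr_eq0 -lt0n fact_gt0. Qed.

Lemma field_aux1 (K : fieldType) (r F a th : K) : F != 0 -> a + 1 != 0 ->
  r * (th + a) / ((a + 1) * F) * (a + 1) - r / F * a = th * (r / F).
Proof. by move=> hF ha; field; rewrite hF ha. Qed.

Lemma B_ode th M n : (n < M)%N ->
  eqm n ((1 - 'X) * (tr M (binser th 1))^`()) (th *: tr M (binser th 1)).
Proof.
move=> nM; apply/eqmP => j jn.
rewrite mulrBl mul1r coefB coefXM coefZ !coef_deriv !coef_tr.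
have j1M : (j.+1 < M)%N by apply: leq_ltn_trans nM.
rewrite j1M (ltnW j1M) /binser !expr1n !mulr1.
case: j jn j1M => [|j] jn j1M.
  rewrite /= /rising big_ord1 big_ord0 /= fact0 addr0 !divr1 mulr1n mulr1 subr0.
  by [].
have -> : (j.+1 == 0%N) = false by [].
have -> : (j.+1.-1.+1 < M)%N by apply: ltnW.
rewrite risingS (factS j.+1) natrM -[_ *+ j.+2]mulr_natr -[_ *+ j.+1]mulr_natr.
have h1 := fact_neq0 j.+1.
have h2 : ((j.+1)%:R + 1 : C) != 0 by rewrite natr1 pnatr_eq0.
rewrite -[(j.+2)%:R]natr1 mul1r.
have := @field_aux1 C (rising th j.+1) ((j.+1)`!%:R) (j.+1%:R) th h1 h2.
by rewrite [_ / _ * j.+1%:R]mulr_natr.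
Qed.

Lemma field_aux2 (K : fieldType) (c F a x : K) : F != 0 -> a + 1 != 0 ->
  x * c / ((a + 1) * F) * (a + 1) = c * (x / F).
Proof. by move=> hF ha; field; rewrite hF ha. Qed.

Lemma E_ode c M n : (n < M)%N ->
  eqm n ((tr M (expser c))^`()) (c *: tr M (expser c)).
Proof.
move=> nM; apply/eqmP => j jn.
rewrite coefZ coef_deriv !coef_tr.
have j1M : (j.+1 < M)%N by apply: leq_ltn_trans nM.
rewrite j1M (ltnW j1M) /expser factS natrM exprSr -[_ *+ j.+1]mulr_natr.
have h1 := fact_neq0 j.
have h2 : ((j%:R + 1) : C) != 0 by rewrite natr1 pnatr_eq0.
by rewrite -[(j.+1)%:R]natr1 field_aux2.
Qed.

Lemma dvXB1 y z : dvX 1 y -> dvX 1 z -> dvX 1 (y + z - y * z).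
Proof. by move=> hy hz; apply: dvXB; [apply: dvXD|apply: dvXMr]. Qed.

Lemma B_prod th M n y z : (n < M)%N -> dvX 1 y -> dvX 1 z ->
  eqm n.+1 ((tr M (binser th 1) \Po y) * (tr M (binser th 1) \Po z))
           (tr M (binser th 1) \Po (y + z - y * z)).
Proof.
move=> nM hy hz; set B := tr M (binser th 1); set w := y + z - y * z.
have hw : dvX 1 w by apply: dvXB1.
have hcomp v : dvX 1 v -> eqm n ((1 - v) * (B^`() \Po v)) (th *: (B \Po v)).
  move=> hv; have := eqm_comp1 hv (B_ode th nM).
  by rewrite comp_polyM comp_polyB comp1 comp_polyX comp_polyZ.
have HE : eqm n.+1 ((B \Po y) * (B \Po z) - (B \Po w)) 0.
  apply: (@ode_uniq n (1 - w) (th *: w^`())).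
  - by rewrite coefB coef1 ((dvXP 1 w).1 hw 0 isT) subr0.
  - rewrite coefB coef0M !coef0_comp // coef_tr /= (leq_ltn_trans _ nM) //.
    by rewrite /binser /rising !big_ord0 fact0 expr0 divr1 mulr1 mulr1 subrr.
  - rewrite /eqm.
    have -> : (1 - w) * ((B \Po y) * (B \Po z) - (B \Po w))^`() -
      th *: w^`() * ((B \Po y) * (B \Po z) - (B \Po w)) =
      ((1 - y) * (B^`() \Po y) - th *: (B \Po y)) * (y^`() * (1 - z) * (B \Po z))
      + ((1 - z) * (B^`() \Po z) - th *: (B \Po z)) * (z^`() * (1 - y) * (B \Po y))
      - ((1 - w) * (B^`() \Po w) - th *: (B \Po w)) * w^`().
      rewrite derivB derivM !deriv_comp /w !derivB derivD derivM.
      rewrite -!mul_polyC; ring.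
    by apply: dvXB; [apply: dvXD|]; apply: dvXMr; apply: hcomp.
by rewrite /eqm subr0 in HE.
Qed.

Lemma E_prod c M n y z : (n < M)%N -> dvX 1 y -> dvX 1 z ->
  eqm n.+1 ((tr M (expser c) \Po y) * (tr M (expser c) \Po z))
           (tr M (expser c) \Po (y + z)).
Proof.
move=> nM hy hz; set E := tr M (expser c); set w := y + z.
have hw : dvX 1 w by apply: dvXD.
have hcomp v : dvX 1 v -> eqm n (E^`() \Po v) (c *: (E \Po v)).
  move=> hv; have := eqm_comp1 hv (E_ode c nM).
  by rewrite comp_polyZ.
have HE : eqm n.+1 ((E \Po y) * (E \Po z) - (E \Po w)) 0.
  apply: (@ode_uniq n 1 (c *: w^`())).
  - by rewrite coef1.
  - rewrite coefB coef0M !coef0_comp // coef_tr /= (leq_ltn_trans _ nM) //.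
    by rewrite /expser expr0 fact0 divr1 mulr1 subrr.
  - rewrite /eqm.
    have -> : 1 * ((E \Po y) * (E \Po z) - (E \Po w))^`() -
      c *: w^`() * ((E \Po y) * (E \Po z) - (E \Po w)) =
      ((E^`() \Po y) - c *: (E \Po y)) * (y^`() * (E \Po z))
      + ((E^`() \Po z) - c *: (E \Po z)) * (z^`() * (E \Po y))
      - ((E^`() \Po w) - c *: (E \Po w)) * w^`().
      rewrite derivB derivM !deriv_comp /w !derivD.
      rewrite -!mul_polyC; ring.
    by apply: dvXB; [apply: dvXD|]; apply: dvXMr; apply: hcomp.
by rewrite /eqm subr0 in HE.
Qed.
Definition wE (tau : C) (w : {poly C}) : {poly C} := w ^+ 2 - tau *: ('X * w) - 1.

Fixpoint wN (tau : C) (N : nat) : {poly C} :=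
  match N with
  | 0%N => 1
  | m.+1 => wN tau m - ((wE tau (wN tau m))`_m.+1 / 2) *: 'X^(m.+1)
  end.

Lemma dvX_X1 : dvX 1 'X.
Proof. by exists 1; rewrite mul1r expr1. Qed.

Lemma dvX_Xn n : dvX n 'X^n.
Proof. by exists 1; rewrite mul1r. Qed.

Lemma two_neq0 : (2 : C) != 0.
Proof. by rewrite pnatr_eq0. Qed.

Lemma wN_inv tau N : (wN tau N)`_0 = 1 /\ eqm N.+1 (wE tau (wN tau N)) 0.
Proof.
elim: N => [|N [IH0 IH]] /=.
  split; first by rewrite coef1.
  apply/eqmP => k; rewrite ltnS leqn0 => /eqP ->.
  by rewrite /wE expr1n coef0 coefB coefB coef1 coefZ coefXM /= mulr0 subr0 subrr.
set w := wN tau N; set e := (wE tau w)`_N.+1; set c := e / 2.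
have e2 : 2 * c = e by rewrite /c mulrC divfK // two_neq0.
split.
  by rewrite coefB coefZ coefXn /= mulr0 subr0.
set Y : {poly C} := 'X^(N.+1).
have idt : wE tau (w - c *: Y) =
    wE tau w - (2 * c) *: (Y * w) + Y * (c ^+ 2 *: Y + (c * tau) *: 'X).
  rewrite /wE -!mul_polyC !polyCM; ring.
have hd : dvX N.+2 (Y * (c ^+ 2 *: Y + (c * tau) *: 'X)).
  rewrite -addn1; apply: dvXX; first exact: dvX_Xn.
  apply: dvXD; apply: dvXZ; last exact: dvX_X1.
  by apply: (dvX_le _ (dvX_Xn N.+1)).
apply/eqmP => k kN; rewrite coef0 idt e2 coefD coefB coefZ coefXnM.
rewrite ((dvXP _ _).1 hd k kN) addr0.
move: kN; rewrite ltnS leq_eqVlt => /orP [/eqP ->|kN].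
  by rewrite ltnn subnn IH0 mulr1 subrr.
rewrite kN mulr0 subr0; move: (eqm_coef IH kN); rewrite coef0 => ->//.
Qed.

Lemma wN0 tau N : (wN tau N)`_0 = 1.
Proof. by case: (wN_inv tau N). Qed.

Lemma wNE tau N : eqm N.+1 (wE tau (wN tau N)) 0.
Proof. by case: (wN_inv tau N). Qed.

Lemma wN_cons tau M N : (N <= M)%N -> eqm N.+1 (wN tau M) (wN tau N).
Proof.
elim: M => [|M IH]; first by rewrite leqn0 => /eqP ->; apply: eqm_refl.
rewrite leq_eqVlt => /orP [/eqP ->|]; first by apply: eqm_refl.
rewrite ltnS => NM; apply: eqm_trans (IH NM); rewrite /= /eqm.
have -> : wN tau M - ((wE tau (wN tau M))`_M.+1 / 2) *: 'X^(M.+1) - wN tau M =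
   - (((wE tau (wN tau M))`_M.+1 / 2) *: 'X^(M.+1)) by ring.
by apply: dvXN; apply: dvXZ; apply: (dvX_le _ (dvX_Xn M.+1)).
Qed.

Definition aw tau M : {poly C} := 'X * wN tau M.
Definition bw tau M : {poly C} := 'X * (tau *: 'X - wN tau M).

Lemma dvX_aw tau M : dvX 1 (aw tau M).
Proof. by apply: dvXMr; apply: dvX_X1. Qed.

Lemma dvX_bw tau M : dvX 1 (bw tau M).
Proof. by apply: dvXMr; apply: dvX_X1. Qed.

Lemma awbw_add tau M : aw tau M + bw tau M = tau *: 'X^2.
Proof. by rewrite /aw /bw -!mul_polyC; ring. Qed.

Lemma awbw_mul tau M : eqm M.+3 (aw tau M * bw tau M) (- 'X^2).
Proof.
rewrite /eqm.
have -> : aw tau M * bw tau M - - 'X^2 = 'X^2 * (- wE tau (wN tau M)).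
  by rewrite /aw /bw /wE -!mul_polyC; ring.
rewrite -[M.+3]/(2 + M.+1)%N; apply: dvXX; first exact: dvX_Xn.
apply: dvXN; have := wNE tau M; by rewrite /eqm subr0.
Qed.

Lemma aw_cons tau M N : (N <= M)%N -> eqm N.+2 (aw tau M) (aw tau N).
Proof.
move=> NM; rewrite /eqm /aw -mulrBr -[N.+2]/(1 + N.+1)%N.
by apply: dvXX; [apply: dvX_X1| apply: wN_cons].
Qed.

Lemma bw_cons tau M N : (N <= M)%N -> eqm N.+2 (bw tau M) (bw tau N).
Proof.
move=> NM; rewrite /eqm /bw -mulrBr -[N.+2]/(1 + N.+1)%N.
apply: dvXX; first by apply: dvX_X1.
have -> : tau *: 'X - wN tau M - (tau *: 'X - wN tau N) = - (wN tau M - wN tau N) by ring.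
by apply: dvXN; apply: wN_cons.
Qed.

Lemma dvX_cancel n p q : q`_0 != 0 -> dvX n (p * q) -> dvX n p.
Proof.
move=> q0 /dvXP h; apply/dvXP.
have key : forall m, (m < n)%N -> forall k, (k <= m)%N -> p`_k = 0.
  elim => [|m IH] mn k km.
    move: km; rewrite leqn0 => /eqP ->.
    by move: (h 0%N mn); rewrite coef0M => /eqP; rewrite mulf_eq0 (negbTE q0) orbF => /eqP.
  have IH' := IH (ltnW mn).
  move: km; rewrite leq_eqVlt => /orP [/eqP ->|]; last by rewrite ltnS; apply: IH'.
  move: (h _ mn); rewrite coefM big_ord_recr /= subnn.
  rewrite big1 ?add0r; first by move/eqP; rewrite mulf_eq0 (negbTE q0) orbF => /eqP.
  by move=> i _; rewrite IH' ?mul0r // -ltnS.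
by move=> k kn; apply: (key k kn).
Qed.

Lemma coef_compZX c p k : (p \Po (c *: 'X))`_k = c ^+ k * p`_k.
Proof.
rewrite coef_comp_poly.
have e : forall i, (c *: 'X) ^+ i = c ^+ i *: 'X^i by move=> i; rewrite exprZn.
under eq_bigr => i _ do rewrite e coefZ coefXn.
case: (ltnP k (size p)) => hk.
  rewrite (bigD1 (Ordinal hk)) //= eqxx mulr1 big1 ?addr0; first by rewrite mulrC.
  move=> i /eqP ne; rewrite eq_sym; case: eqP => [ei|]; last by rewrite mulr0 mulr0.
  by exfalso; apply: ne; apply: val_inj; rewrite /= ei.
rewrite nth_default // mulr0 big1 // => i _.
by rewrite (_ : (k == i) = false) ?mulr0 ?mulr0 //; apply/negbTE; rewrite neq_ltn (leq_trans (ltn_ord i) hk) orbT.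
Qed.

Lemma negX : - 'X = (-1) *: ('X : {poly C}).
Proof. by rewrite scaleN1r. Qed.

Lemma dvX_negX : dvX 1 (- 'X).
Proof. by apply: dvXN; apply: dvX_X1. Qed.

Lemma w_neg tau M : eqm M.+1 (wN tau M \Po (- 'X)) (wN tau M - tau *: 'X).
Proof.
set w := wN tau M; set v1 := w \Po (- 'X); set v2 := w - tau *: 'X.
have F1 : v1 ^+ 2 + tau *: ('X * v1) - 1 = wE tau w \Po (- 'X).
  rewrite /wE /v1 !comp_polyB comp1 comp_polyZ !comp_polyM comp_polyX.
  by rewrite -!mul_polyC; ring.
have F2 : v2 ^+ 2 + tau *: ('X * v2) - 1 = wE tau w.
  by rewrite /wE /v2 -!mul_polyC; ring.
have e : (v1 - v2) * (v1 + v2 + tau *: 'X) =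
   (v1 ^+ 2 + tau *: ('X * v1) - 1) - (v2 ^+ 2 + tau *: ('X * v2) - 1).
  by rewrite -!mul_polyC; ring.
apply: (@dvX_cancel _ _ (v1 + v2 + tau *: 'X)).
  rewrite !coefD coefN !coefZ coefX /= mulr0 oppr0 !addr0 /v1 (coef0_comp _ dvX_negX).
  by rewrite /w wN0 two_neq0.
have -> : (v1 - v2) * (v1 + v2 + tau *: 'X) = (wE tau w \Po - 'X) - wE tau w.
  by rewrite e F1 F2.
have h1 := eqm_comp1 dvX_negX (wNE tau M).
rewrite /eqm comp_poly0 subr0 in h1.
apply: dvXB; first by [].
by have := wNE tau M; rewrite /eqm subr0.
Qed.

Lemma aw_neg tau M : eqm M.+2 (aw tau M \Po (- 'X)) (bw tau M).
Proof.
rewrite /eqm /aw /bw comp_polyM comp_polyX.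
have -> : - 'X * (wN tau M \Po - 'X) - 'X * (tau *: 'X - wN tau M) =
   (- 'X) * ((wN tau M \Po - 'X) - (wN tau M - tau *: 'X)) by rewrite -!mul_polyC; ring.
rewrite -[M.+2]/(1 + M.+1)%N; apply: dvXX; first exact: dvX_negX.
exact: w_neg.
Qed.

Lemma bw_neg tau M : eqm M.+2 (bw tau M \Po (- 'X)) (aw tau M).
Proof.
rewrite /eqm /aw /bw comp_polyM comp_polyX comp_polyB comp_polyZ comp_polyX.
have -> : - 'X * (tau *: - 'X - (wN tau M \Po - 'X)) - 'X * wN tau M =
   'X * ((wN tau M \Po - 'X) - (wN tau M - tau *: 'X)) by rewrite -!mul_polyC; ring.
rewrite -[M.+2]/(1 + M.+1)%N; apply: dvXX; first exact: dvX_X1.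
exact: w_neg.
Qed.
Module LamM.
From mathcomp Require Import mpoly.
Import Order.TTheory GRing.Theory Num.Theory.
Local Open Scope ring_scope.

Lemma msize_deg n (p : {mpoly C[n]}) d :
  (forall m, p@_m != 0 -> (mdeg m <= d)%N) <-> (msize p <= d.+1)%N.
Proof.
split.
  move=> H; rewrite msizeE; apply/bigmax_leqP_seq => m mp _.
  by rewrite ltnS; apply: H; rewrite -mcoeff_msupp.
move=> H m pm; rewrite -ltnS; apply: leq_trans H.
by apply: msize_mdeg_lt; rewrite mcoeff_msupp.
Qed.

Lemma msizeM_le' n (p q : {mpoly C[n]}) : (msize (p * q) <= (msize p + msize q).-1)%N.
Proof.
have [->|p0] := eqVneq p 0; first by rewrite mul0r msize0.
have [->|q0] := eqVneq q 0; first by rewrite mulr0 msize0.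
by rewrite msizeM.
Qed.

Definition polyrep (F : symfun) (d : nat) :=
  forall n : nat, exists p : mpoly.mpoly n C,
        (forall m : mpoly.multinom n, mpoly.mcoeff m p != 0 -> (mpoly.mdeg m <= d)%N) /\
        forall x : n.-tuple C, F x = mpoly.meval (fun i => tnth x i) p.

Lemma Lam_const (c : C) : in_Lambda (fun _ => c).
Proof.
split => //; exists 0%N => n; exists c%:MP; split.
  move=> m; rewrite mcoeffC; have [->|ne] := eqVneq m 0%MM; first by rewrite mdeg0.
  by rewrite mulr0 eqxx.
by move=> x; rewrite mevalC.
Qed.

Lemma Lam_add F G : in_Lambda F -> in_Lambda G -> in_Lambda (fun s => F s + G s).
Proof.
move=> [F1 F2 [d1 F3]] [G1 G2 [d2 G3]]; split.
- by move=> s s' h; rewrite (F1 _ _ h) (G1 _ _ h).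
- by move=> s; rewrite F2 G2.
exists (maxn d1 d2) => n.
have [p [hp ep]] := F3 n; have [q [hq eq]] := G3 n.
exists (p + q); split; last by move=> x; rewrite mevalD ep eq.
apply/msize_deg; apply: leq_trans (msizeD_le _ _) _.
rewrite geq_max; apply/andP; split.
  by apply: leq_trans ((msize_deg _ _).1 hp) _; rewrite ltnS leq_maxl.
by apply: leq_trans ((msize_deg _ _).1 hq) _; rewrite ltnS leq_maxr.
Qed.

Lemma Lam_mul F G : in_Lambda F -> in_Lambda G -> in_Lambda (fun s => F s * G s).
Proof.
move=> [F1 F2 [d1 F3]] [G1 G2 [d2 G3]]; split.
- by move=> s s' h; rewrite (F1 _ _ h) (G1 _ _ h).
- by move=> s; rewrite F2 G2.
exists (d1 + d2)%N => n.
have [p [hp ep]] := F3 n; have [q [hq eq]] := G3 n.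
exists (p * q); split; last by move=> x; rewrite mevalM ep eq.
apply/msize_deg; apply: leq_trans (msizeM_le' _ _) _.
have h1 := (msize_deg _ _).1 hp; have h2 := (msize_deg _ _).1 hq.
have := leq_add h1 h2; rewrite addSn addnS /=; lia.
Qed.

Definition graded n (P : {poly {mpoly C[n]}}) := forall j, (msize P`_j <= j.+1)%N.

Lemma graded1 n : graded (1 : {poly {mpoly C[n]}}).
Proof.
move=> j; rewrite coef1; case: eqP => [->|_]; first by rewrite msize1.
by rewrite msize0.
Qed.

Lemma gradedM n (P Q : {poly {mpoly C[n]}}) : graded P -> graded Q -> graded (P * Q).
Proof.
move=> hP hQ j; rewrite coefM; apply: leq_trans (msize_sum _ _ _) _.
apply/bigmax_leqP => i _; apply: leq_trans (msizeM_le' _ _) _.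
have := leq_add (hP i) (hQ (j - i)%N); have := ltn_ord i; lia.
Qed.

Definition bcoef (th : C) (j : nat) : C := binser th 1 j.

Definition Qpoly n (th : C) (m : nat) (i : 'I_n) : {poly {mpoly C[n]}} :=
  \poly_(j < m.+1) (bcoef th j *: 'X_i ^+ j).

Lemma gradedQ n th m i : graded (@Qpoly n th m i).
Proof.
move=> j; rewrite coef_poly; case: ifP => _; last by rewrite msize0.
apply: leq_trans (msizeZ_le _ _) _.
by rewrite mpolyXn msizeX mdegMn mdeg1 mul1n.
Qed.

Lemma tr_binser0 th N : (0 < N)%N -> tr N (binser th 0) = 1.
Proof.
move=> N0; apply/polyP => i; rewrite coef_tr coef1 /binser.
case: i => [|i] /=; first by rewrite N0 /rising big_ord0 fact0 expr0 divr1 mulr1.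
by rewrite expr0n /= mulr0; case: ifP.
Qed.

Lemma map_Q n th m (v : 'I_n -> C) i :
  map_poly (meval v) (Qpoly th m i) = tr m.+1 (binser th (v i)).
Proof.
apply/polyP => j; rewrite coef_map coef_tr !coef_poly; case: ifP => _; last by rewrite raddf0.
change (meval v (bcoef th j *: 'X_i ^+ j) = binser th (v i) j).
rewrite mevalZ rmorphXn.
rewrite (_ : mpoly_meval__canonical__GRing_RMorphism v 'X_i = v i); last exact: mevalXU.
by rewrite /bcoef /binser expr1n mulr1 mulrC.
Qed.

Lemma g_Lam (th : C) m : in_Lambda (fun s => sprod [seq binser th x | x <- s] m).
Proof.
have gE s : sprod [seq binser th x | x <- s] m = (\prod_(f <- [seq binser th x | x <- s]) tr m.+1 f)`_m.
  by rewrite (@sprod_coef m.+1 _ _ (ltnSn m)).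
split.
- by move=> s s' h; rewrite !gE !big_map (perm_big _ h).
- by move=> s; rewrite !gE map_rcons big_rcons /= tr_binser0 // mulr1.
exists m => n.
exists ((\prod_(i < n) Qpoly th m i)`_m); split.
  apply/msize_deg; apply: (big_ind (fun P => graded P)).
  - exact: graded1.
  - by move=> P Q; apply: gradedM.
  - by move=> i _; apply: gradedQ.
move=> x; rewrite gE -coef_map rmorph_prod big_map big_tuple.
rewrite (eq_bigr (fun i => map_poly (meval (fun i => tnth x i)) (Qpoly th m i))) //.
by move=> i _; rewrite map_Q.
Qed.

Lemma Lam_ext F G : (forall s, F s = G s) -> in_Lambda F -> in_Lambda G.
Proof.
move=> e [F1 F2 [d F3]]; split.
- by move=> s s' h; rewrite -!e; apply: F1.
- by move=> s; rewrite -!e.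
exists d => n; have [p [hp ep]] := F3 n; exists p; split => // x.
by rewrite -e.
Qed.

Lemma Lam_sum n (F : 'I_n -> symfun) : (forall i, in_Lambda (F i)) ->
  in_Lambda (fun s => \sum_(i < n) F i s).
Proof.
elim: n F => [|n IH] F H.
  by apply: (Lam_ext _ (Lam_const 0)) => s; rewrite big_ord0.
apply: (Lam_ext _ (Lam_add (IH (fun i => F (widen_ord (leqnSn n) i)) (fun i => H _)) (H ord_max))).
by move=> s; rewrite big_ord_recr.
Qed.
End LamM.

From mathcomp Require Import all_classical all_reals all_analysis.
From mathcomp Require Import complex Rstruct Rstruct_topology.
Import Order.TTheory GRing.Theory Num.Theory.
Import numFieldNormedType.Exports.
Local Open Scope classical_set_scope.
Local Open Scope ring_scope.
Local Open Scope complex_scope.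

Definition Hs tau M (f : fps) : {poly C} :=
  (tr M f \Po aw tau M) * (tr M f \Po bw tau M).

Definition Phi tau (f : fps) : fps := fun k => (Hs tau k.*2.+1 f)`_(k.*2).

Lemma tr_cons N M f : (N <= M)%N -> eqm N (tr M f) (tr N f).
Proof.
move=> NM; apply/eqmP => k kN; rewrite !coef_tr kN.
by rewrite (leq_trans kN NM).
Qed.

Lemma aw_consN tau M N : (N <= M)%N -> eqm N (aw tau M) (aw tau N).
Proof. by move=> NM; apply: (eqm_le _ (aw_cons tau NM)); rewrite leqW. Qed.

Lemma bw_consN tau M N : (N <= M)%N -> eqm N (bw tau M) (bw tau N).
Proof. by move=> NM; apply: (eqm_le _ (bw_cons tau NM)); rewrite leqW. Qed.

Lemma Hs_consN tau M N f : (N <= M)%N -> eqm N (Hs tau M f) (Hs tau N f).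
Proof.
move=> NM; apply: eqmM; apply: eqm_comp.
- exact: dvX_aw.
- exact: dvX_aw.
- exact: tr_cons NM.
- exact: aw_consN NM.
- exact: dvX_bw.
- exact: dvX_bw.
- exact: tr_cons NM.
- exact: bw_consN NM.
Qed.

Lemma PhiE tau f k M : (k.*2 < M)%N -> Phi tau f k = (Hs tau M f)`_(k.*2).
Proof.
move=> kM; rewrite /Phi; apply/esym/(eqm_coef (Hs_consN tau f kM)).
exact: ltnSn.
Qed.

Lemma Hs_neg tau M f : eqm M.+2 (Hs tau M f \Po (- 'X)) (Hs tau M f).
Proof.
rewrite /Hs comp_polyM -!comp_polyA mulrC.
apply: eqmM; apply: eqm_comp2; by [apply: aw_neg|apply: bw_neg].
Qed.

Lemma Hs_even tau M f k : odd k -> (k < M.+2)%N -> (Hs tau M f)`_k = 0.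
Proof.
move=> ok kM; have := eqm_coef (Hs_neg tau M f) kM.
rewrite negX coef_compZX -signr_odd ok expr1 mulN1r => /eqP.
rewrite -subr_eq0 -opprD oppr_eq0 -mulr2n mulrn_eq0 /= => /eqP //.
Qed.

Lemma add4_aux (K : comNzRingType) (a b c d : K) :
  a + b + c + d = a + d + (b + c).
Proof. ring. Qed.

Lemma sum_parity (F : nat -> C) k :
  \sum_(i < k.*2.+1) F i = \sum_(j < k.+1) F (j.*2) + \sum_(j < k) F (j.*2.+1).
Proof.
elim: k => [|k IH]; first by rewrite big_ord0 !big_ord1 addr0.
rewrite doubleS (big_ord_recr k.*2.+2) (big_ord_recr k.*2.+1) /= IH.
rewrite [\sum_(j < k.+2) F j.*2]big_ord_recr [\sum_(j < k.+1) F j.*2.+1]big_ord_recr /=.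
by rewrite add4_aux.
Qed.

Lemma comp_sum (I : Type) (s : seq I) (F : I -> {poly C}) q :
  (\sum_(i <- s) F i) \Po q = \sum_(i <- s) (F i \Po q).
Proof.
elim: s => [|a s IH]; first by rewrite !big_nil comp_poly0.
by rewrite !big_cons comp_polyD IH.
Qed.

Lemma tr_comp N f q : tr N f \Po q = \sum_(i < N) f i *: q ^+ i.
Proof.
rewrite /tr poly_def comp_sum; apply: eq_bigr => i _.
by rewrite comp_polyZ comp_Xn.
Qed.

Lemma Phi_mul tau f g k : Phi tau (smul f g) k = smul (Phi tau f) (Phi tau g) k.
Proof.
set n := k.*2.+1.
have e : eqm n (Hs tau n (smul f g)) (Hs tau n f * Hs tau n g).
  have h1 : eqm n (tr n (smul f g) \Po aw tau n) ((tr n f \Po aw tau n) * (tr n g \Po aw tau n)).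
    by rewrite -comp_polyM; apply: eqm_comp1; [apply: dvX_aw|apply: tr_smul].
  have h2 : eqm n (tr n (smul f g) \Po bw tau n) ((tr n f \Po bw tau n) * (tr n g \Po bw tau n)).
    by rewrite -comp_polyM; apply: eqm_comp1; [apply: dvX_bw|apply: tr_smul].
  have := eqmM h1 h2; rewrite /Hs.
  set A := (tr n f \Po aw tau n); set B := (tr n g \Po aw tau n).
  set A' := (tr n f \Po bw tau n); set B' := (tr n g \Po bw tau n).
  by have -> : A * A' * (B * B') = A * B * (A' * B') by ring.
rewrite /Phi (eqm_coef e (ltnSn _)) coefM (sum_parity (fun i => (Hs tau n f)`_i * (Hs tau n g)`_(k.*2 - i))).
rewrite [X in _ + X]big1 ?addr0; last first.
  move=> j _; rewrite Hs_even ?mul0r //; first by rewrite /= odd_double.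
  by rewrite /n; have := ltn_ord j; rewrite -!muln2; lia.
rewrite /smul; apply: eq_bigr => j _.
rewrite -(PhiE tau f (k := j)); last by rewrite /n; have := ltn_ord j; rewrite -!muln2; lia.
rewrite -doubleB -(PhiE tau g (k := (k - j)%N)) //.
by rewrite /n; have := ltn_ord j; rewrite -!muln2; lia.
Qed.

Lemma Phi_smul tau f g : Phi tau (smul f g) = smul (Phi tau f) (Phi tau g).
Proof. by apply: funext => k; apply: Phi_mul. Qed.

Lemma tr_sone N : (0 < N)%N -> tr N sone = 1.
Proof.
move=> N0; apply/polyP => i; rewrite coef_tr coef1 /sone.
case: ltnP => // iN; case: eqP => // i0; move: iN; rewrite i0 leqn0.
by move/eqP => N00; rewrite N00 in N0.
Qed.

Lemma Phi_sone tau : Phi tau sone = sone.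
Proof.
apply: funext => k; rewrite /Phi /Hs tr_sone // !comp1 mulr1 coef1 /sone.
by rewrite double_eq0.
Qed.

Lemma Phi_sprod tau s : Phi tau (sprod s) = sprod (map (Phi tau) s).
Proof.
elim: s => [|f s IH]; first by rewrite /sprod /= Phi_sone.
by rewrite /sprod /= -/(sprod s) Phi_smul IH.
Qed.

Lemma Phi_lin tau c : Phi tau (linser c) = linser (c * (tau - c)).
Proof.
apply: funext => k; set n := k.*2.+1; rewrite /Phi -/n.
have e1 : eqm n (tr n (linser c)) (1 + c *: 'X).
  apply/eqmP => i iN; rewrite coef_tr iN coefD coef1 coefZ coefX /linser.
  by case: i {iN} => [|[|i]] /=; rewrite ?mulr0 ?mulr1 ?addr0 ?add0r.
have e2 : eqm n (Hs tau n (linser c)) (1 + (c * (tau - c)) *: 'X^2).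
  have h : eqm n (Hs tau n (linser c)) (((1 + c *: 'X) \Po aw tau n) * ((1 + c *: 'X) \Po bw tau n)).
    by rewrite /Hs; apply: eqmM; apply: eqm_comp1; by [apply: dvX_aw|apply: dvX_bw|exact: e1].
  apply: eqm_trans h _.
  rewrite !comp_polyD !comp1 !comp_polyZ !comp_polyX.
  have -> : (1 + c *: aw tau n) * (1 + c *: bw tau n) =
     1 + c *: (aw tau n + bw tau n) + (c ^+ 2) *: (aw tau n * bw tau n).
    by rewrite -!mul_polyC polyC_exp; ring.
  rewrite awbw_add.
  have -> : 1 + (c * (tau - c)) *: 'X^2 = 1 + c *: (tau *: 'X^2) + (c ^+ 2) *: (- 'X^2 : {poly C}).
    by rewrite -!mul_polyC polyC_exp polyCM polyCB; ring.
  apply: eqmD; first by apply: eqm_refl.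
  by apply: eqmZ; apply: (eqm_le _ (awbw_mul tau n)); rewrite leqW // leqW.
rewrite (eqm_coef e2 (ltnSn _)) coefD coef1 coefZ coefXn /linser double_eq0.
case: k {n e1 e2} => [|[|k]] //=; rewrite ?mulr0 ?mulr1 ?addr0 ?add0r //.
Qed.

Lemma coef_compX2 p k : (p \Po 'X^2)`_(k.*2) = p`_k.
Proof. by rewrite coef_comp_poly_Xn // -mul2n dvdn_mulr // mulKn. Qed.

Lemma Phi_exp tau c : Phi tau (expser c) = expser (c * tau).
Proof.
apply: funext => k; set n := k.*2.+1; rewrite /Phi -/n.
have e := E_prod c (ltnSn k.*2) (dvX_aw tau n) (dvX_bw tau n).
rewrite /Hs (eqm_coef e (ltnSn _)) awbw_add.
have -> : tau *: 'X^2 = (tau *: 'X) \Po ('X^2 : {poly C}) by rewrite comp_polyZ comp_polyX.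
rewrite comp_polyA coef_compX2 coef_compZX coef_tr ifT; last by rewrite /n -!muln2; lia.
by rewrite /expser exprMn mulrA [tau ^+ k * _]mulrC.
Qed.

Lemma tr_binser th x M : tr M (binser th x) = tr M (binser th 1) \Po (x *: 'X).
Proof.
apply/polyP => i; rewrite coef_compZX !coef_tr.
by case: ifP; rewrite ?mulr0 // /binser expr1n mulr1 mulrC.
Qed.

Lemma Phi_bin tau th x : Phi tau (binser th x) = binser th (x * (x + tau)).
Proof.
apply: funext => k; set n := k.*2.+1; rewrite /Phi -/n.
set B := tr n (binser th 1).
have hy : dvX 1 (x *: aw tau n) by apply: dvXZ; apply: dvX_aw.
have hz : dvX 1 (x *: bw tau n) by apply: dvXZ; apply: dvX_bw.
have e := B_prod th (ltnSn k.*2) hy hz.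
rewrite /Hs tr_binser -!comp_polyA !comp_polyZ !comp_polyX -/B.
rewrite (eqm_coef e (ltnSn _)).
have e2 : eqm n (x *: aw tau n + x *: bw tau n - x *: aw tau n * (x *: bw tau n))
               ((x * (x + tau)) *: 'X^2).
  have -> : x *: aw tau n + x *: bw tau n - x *: aw tau n * (x *: bw tau n) =
     x *: (aw tau n + bw tau n) - (x ^+ 2) *: (aw tau n * bw tau n).
    by rewrite -!mul_polyC polyC_exp; ring.
  rewrite awbw_add.
  have -> : (x * (x + tau)) *: 'X^2 = x *: (tau *: 'X^2) - (x ^+ 2) *: (- 'X^2 : {poly C}).
    by rewrite -!mul_polyC polyC_exp polyCM polyCD; ring.
  apply: eqmD; first by apply: eqm_refl.
  rewrite /eqm -opprD -scalerBr; apply: dvXN; apply: dvXZ.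
  by apply: (eqm_le _ (awbw_mul tau n)); rewrite leqW // leqW.
rewrite (eqm_coef (eqm_comp2 B e2) (ltnSn _)).
have -> : (x * (x + tau)) *: 'X^2 = ((x * (x + tau)) *: 'X) \Po ('X^2 : {poly C}).
  by rewrite comp_polyZ comp_polyX.
rewrite comp_polyA coef_compX2 coef_compZX coef_tr ifT; last by rewrite /n -!muln2; lia.
by rewrite /binser expr1n mulr1 mulrC.
Qed.

Lemma Phi_expand tau f k : Phi tau f k =
  \sum_(i < k.*2.+1) \sum_(j < k.*2.+1)
     f i * f j * ((aw tau k.*2.+1 ^+ i * bw tau k.*2.+1 ^+ j)`_(k.*2)).
Proof.
rewrite /Phi /Hs !tr_comp mulr_suml coef_sum; apply: eq_bigr => i _.
rewrite mulr_sumr coef_sum; apply: eq_bigr => j _.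
by rewrite -scalerAl -scalerAr scalerA coefZ.
Qed.
Lemma cvg_sum_ord n (F : nat -> 'I_n -> C) (L : 'I_n -> C) :
  (forall i, (fun N => F N i) @ \oo --> L i) ->
  (fun N => \sum_(i < n) F N i) @ \oo --> \sum_(i < n) L i.
Proof.
elim: n F L => [|n IH] F L H.
  have -> : (fun N => \sum_(i < 0) F N i) = (fun _ => 0) by apply: funext => N; rewrite big_ord0.
  by rewrite big_ord0; apply: cvg_cst.
have -> : (fun N => \sum_(i < n.+1) F N i) =
   (fun N => \sum_(i < n) F N (widen_ord (leqnSn n) i) + F N ord_max).
  by apply: funext => N; rewrite big_ord_recr.
rewrite big_ord_recr /=.
exact: (cvgD (IH (fun N i => F N (widen_ord (leqnSn n) i)) (fun i => L (widen_ord (leqnSn n) i)) (fun i => H _)) (H ord_max)).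
Qed.

Lemma Phi_cvg tau (u : nat -> fps) (P : fps) :
  (forall i, (fun N => u N i) @ \oo --> P i) ->
  forall k, (fun N => Phi tau (u N) k) @ \oo --> Phi tau P k.
Proof.
move=> H k.
have -> : (fun N => Phi tau (u N) k) = (fun N => \sum_(i < k.*2.+1) \sum_(j < k.*2.+1)
     u N i * u N j * ((aw tau k.*2.+1 ^+ i * bw tau k.*2.+1 ^+ j)`_(k.*2))).
  by apply: funext => N; rewrite Phi_expand.
rewrite Phi_expand; apply: cvg_sum_ord => i; apply: cvg_sum_ord => j.
apply: cvgMl; apply: cvgM; exact: H.
Qed.

Lemma eps_sum (eps : symfun -> C) (he : is_alg_hom eps) n (F : 'I_n -> symfun) :
  (forall i, in_Lambda (F i)) ->
  eps (fun s => \sum_(i < n) F i s) = \sum_(i < n) eps (F i).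
Proof.
case: he => hc ha hm.
elim: n F => [|n IH] F H.
  have -> : (fun s : seq C => \sum_(i < 0) F i s) = (fun _ => 0) by apply: funext => s; rewrite big_ord0.
  by rewrite hc big_ord0.
have -> : (fun s => \sum_(i < n.+1) F i s) =
   (fun s => (fun s => \sum_(i < n) F (widen_ord (leqnSn n) i) s) s + F ord_max s).
  by apply: funext => s; rewrite big_ord_recr.
have L1 : in_Lambda (fun s => \sum_(i < n) F (widen_ord (leqnSn n) i) s).
  by apply: LamM.Lam_sum => i; apply: H.
rewrite (ha _ _ L1 (H ord_max)) IH ?big_ord_recr // => i; apply: H.
Qed.
Lemma binser0 th x : binser th x 0 = 1.
Proof. by rewrite /binser /rising big_ord0 fact0 expr0 divr1 mulr1. Qed.

Lemma sprod_bin0 th s : sprod [seq binser th x | x <- s] 0 = 1.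
Proof.
elim: s => [|x s IH] /=; first by rewrite /sprod /= /sone.
by rewrite /sprod /= /smul big_ord1 binser0 mul1r subnn; apply: IH.
Qed.

Lemma Phi_bins tau th s :
  Phi tau (sprod [seq binser th x | x <- s]) =
  sprod [seq binser th x | x <- [seq x * (x + tau) | x <- s]].
Proof.
rewrite Phi_sprod -!map_comp; congr sprod; apply: eq_map => x /=.
exact: Phi_bin.
Qed.

Theorem proposition3p2 (theta : R) (htheta : 0 < theta)
    (alpha beta : nat -> R) (gamma : R) (hVK : is_VK alpha beta gamma)
    (eps : symfun -> C) (heps : is_VK_hom theta alpha beta gamma eps)
    (tau : C) :
  exists P : fps,
    is_infprod
      (fun i => smul
         (linser (theta%:C * (beta i)%:C * (tau - theta%:C * (beta i)%:C)))
         (binser theta%:C ((alpha i)%:C * (tau + (alpha i)%:C)))) P /\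
    genser (fun k => eps (pi_tau tau (g_k theta k)))
      = smul (expser (gamma%:C * theta%:C * tau)) P.
Proof.
case: heps => hom [P [hP hE]].
have hom' := hom; case: hom' => hc ha hm.
set th : C := theta%:C.
have gLam m : in_Lambda (g_k theta m) := LamM.g_Lam th m.
pose e := fun m => eps (g_k theta m).
have ge : genser e = e.
  apply: funext => -[|m] //=; rewrite /e.
  have -> : g_k theta 0 = (fun _ => 1) by apply: funext => s; rewrite /g_k sprod_bin0.
  by rewrite hc.
have gpi : genser (fun k => eps (pi_tau tau (g_k theta k))) =
           (fun k => eps (pi_tau tau (g_k theta k))).
  apply: funext => -[|m] //=.
  have -> : pi_tau tau (g_k theta 0) = (fun _ => 1).
    by apply: funext => s; rewrite /pi_tau /g_k sprod_bin0.
  by rewrite hc.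
exists (Phi tau P); split.
  move=> k.
  have -> : (fun N : nat => sprod [seq (fun i => smul
         (linser (theta%:C * (beta i)%:C * (tau - theta%:C * (beta i)%:C)))
         (binser theta%:C ((alpha i)%:C * (tau + (alpha i)%:C)))) i | i <- iota 0 N] k)
     = (fun N => Phi tau (sprod [seq (fun i => smul (linser ((beta i)%:C * theta%:C))
                              (binser theta%:C (alpha i)%:C)) i | i <- iota 0 N]) k).
    apply: funext => N; rewrite Phi_sprod -map_comp; congr (sprod _ k).
    apply: eq_map => i /=; rewrite Phi_smul Phi_lin Phi_bin.
    by rewrite [(beta i)%:C * _]mulrC [(alpha i)%:C + _]addrC.
  by apply: Phi_cvg => i; apply: hP.
rewrite gpi; apply: funext => k.
set c := fun i j => (aw tau k.*2.+1 ^+ i * bw tau k.*2.+1 ^+ j)`_(k.*2).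
have piE : pi_tau tau (g_k theta k) = (fun s => \sum_(i < k.*2.+1) \sum_(j < k.*2.+1)
      g_k theta i s * g_k theta j s * c i j).
  apply: funext => s; rewrite /pi_tau /g_k -Phi_bins Phi_expand //.
have eE : eps (pi_tau tau (g_k theta k)) = Phi tau e k.
  rewrite piE Phi_expand eps_sum //; last first.
    move=> i; apply: LamM.Lam_sum => j; apply: LamM.Lam_mul; last exact: LamM.Lam_const.
    by apply: LamM.Lam_mul.
  apply: eq_bigr => i _; rewrite eps_sum //; last first.
    move=> j; apply: LamM.Lam_mul; last exact: LamM.Lam_const.
    by apply: LamM.Lam_mul.
  apply: eq_bigr => j _.
  rewrite (hm (fun s => g_k theta i s * g_k theta j s) (fun _ => c i j)); last first.
  - exact: LamM.Lam_const.
  - by apply: LamM.Lam_mul.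
  by rewrite hc hm.
rewrite eE -ge /e hE Phi_mul Phi_exp.
by [].
Qed.
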